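(* Let $1<p<\infty$ and let $\mathcal{U}$ be a selective nonprincipal ultrafilter on $\mathbb{N}$. If $(f_n)_{n,\mathcal{U}}$ lies in the range of $R$, then there are $g_1,g_2,\ldots\in L^{p}$ with pairwise disjoint (essential) supports such that $(f_n)_{n,\mathcal{U}}=(g_n)_{n,\mathcal{U}}$.
   Context: $L^{p}=L^{p}([0,1],\mu)$, $\mu$ Lebesgue measure. $(L^{p})^{\mathcal{U}}$ is the ultrapower of $L^p$, $(f_n)_{n,\mathcal{U}}$ the class of a bounded sequence. $R:(L^{p})^{\mathcal{U}}\to(L^{p})^{\mathcal{U}}$ is the projection $R[(f_n)_{n,\mathcal{U}}]=\lim_{r\to\infty}(f_nI(|f_n|>r))_{n,\mathcal{U}}$ (norm limit, which exists), $I(|f|>r)$ the indicator of $\{|f|>r\}$. An ultrafilter $\mathcal{U}$ on $\mathbb{N}$ is selective if (1) for every sequence $A_1,A_2,\dots$ in $\mathcal{U}$ there is $A\in\mathcal{U}$ with $A\setminus A_k$ finite for each $k$; and (2) for every partition of $\mathbb{N}$ into finite sets $A_1,A_2,\dots$ there is $A\in\mathcal{U}$ with $A\cap A_k$ a singleton for each $k$. *)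

(* Defs.v *)
From HB Require Import structures.
From mathcomp Require Import all_boot all_order all_algebra.
From mathcomp Require Import all_classical all_reals all_analysis.
Set Implicit Arguments. Unset Strict Implicit. Unset Printing Implicit Defensive.
Import Order.TTheory GRing.Theory Num.Theory.
Local Open Scope classical_set_scope.
Local Open Scope ring_scope.

Definition is_ultrafilter (U : set (set nat)) : Prop :=
  [/\ U setT, ~ U set0,
      (forall A B, U A -> A `<=` B -> U B),
      (forall A B, U A -> U B -> U (A `&` B)) &
      (forall A, U A \/ U (~` A))].

Definition nonprincipal (U : set (set nat)) : Prop :=
  forall A : set nat, finite_set A -> ~ U A.

(** Selective ultrafilter, conditions (1) and (2) of the paper.
    A partition of nat into finite sets: pairwise disjoint, nonempty,
    finite blocks covering nat (necessarily countably many). *)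
Definition selective (U : set (set nat)) : Prop :=
  is_ultrafilter U /\
  (forall A : nat -> set nat, (forall k, U (A k)) ->
     exists2 B, U B & forall k, finite_set (B `\` A k)) /\
  (forall A : nat -> set nat,
     (forall k l, k <> l -> A k `&` A l = set0) ->
     (forall k, A k !=set0) ->
     (forall k, finite_set (A k)) ->
     \bigcup_k A k = setT ->
     exists2 B, U B & forall k, exists x, B `&` A k = [set x]).

Section Lp.
Variable R : realType.
Notation mu := (@lebesgue_measure R).
Definition I01 : set R := `[(0:R)%R, 1%R].

Definition inLp (p : R) (f : R -> R) : Prop :=
  measurable_fun I01 f /\
  (\int[mu]_(x in I01) ((`|f x| `^ p)%:E) < +oo)%E.

Definition Lpnorm (p : R) (f : R -> R) : R :=
  (fine (\int[mu]_(x in I01) ((`|f x| `^ p)%:E))) `^ p^-1.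

(** A bounded sequence in L^p (a representative of an element of the ultrapower). *)
Definition bdd_Lp_seq (p : R) (f : nat -> R -> R) : Prop :=
  (forall n, inLp p (f n)) /\ exists M : R, forall n, Lpnorm p (f n) <= M.

(** Equality of classes in the ultrapower: lim_U ||f_n - g_n||_p = 0. *)
Definition ueq (U : set (set nat)) (p : R) (f g : nat -> R -> R) : Prop :=
  forall eps : R, 0 < eps -> U [set n | Lpnorm p (f n \- g n) < eps].

Definition trunc_above (r : R) (f : R -> R) : R -> R :=
  fun x => if r < `|f x| then f x else 0.

(** (f_n)_U = R[(h_n)_U], i.e. (f_n)_U is the norm limit as r -> oo of
    (h_n I(|h_n|>r))_U in the ultrapower. *)
Definition is_R_image (U : set (set nat)) (p : R) (h f : nat -> R -> R) : Prop :=
  forall eps : R, 0 < eps -> exists r0 : R, forall r : R, r0 <= r ->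
    U [set n | Lpnorm p (f n \- trunc_above r (h n)) < eps].

Definition in_range_R (U : set (set nat)) (p : R) (f : nat -> R -> R) : Prop :=
  exists2 h, bdd_Lp_seq p h & is_R_image U p h f.

Definition disjoint_supports (g : nat -> R -> R) : Prop :=
  forall m n, m <> n ->
    mu (I01 `&` [set x | g m x <> 0 /\ g n x <> 0]) = 0%E.
End Lp.

(* Main.v *)
Require Import Defs.
From HB Require Import structures.
From mathcomp Require Import all_boot all_order all_algebra.
From mathcomp Require Import all_classical all_reals all_analysis measurable_realfun.
From mathcomp Require Import zify ring lra.
Import Order.TTheory GRing.Theory Num.Theory.
Set Implicit Arguments. Unset Strict Implicit. Unset Printing Implicit Defensive.
Local Open Scope classical_set_scope.
Local Open Scope ring_scope.
Section Comb.
Variable U : set (set nat).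
Hypothesis hU : is_ultrafilter U.

Lemma U_up A B : U A -> A `<=` B -> U B.
Proof. by case: hU => _ _ h _ _; exact: h. Qed.

Lemma U_I A B : U A -> U B -> U (A `&` B).
Proof. by case: hU => _ _ _ h _; exact: h. Qed.

Lemma U_cofinite (hnp : nonprincipal U) N : U [set m | (N <= m)%N].
Proof.
case: hU => _ _ _ _ /(_ [set m | (N <= m)%N]) [//|hc].
exfalso; apply: (hnp _ _ hc); apply: (sub_finite_set _ (finite_II N)).
by move=> m /= /negP; rewrite -ltnNge.
Qed.

Lemma bounded_of_finite (A : set nat) : finite_set A ->
  exists N, forall m, A m -> (m < N)%N.
Proof.
move=> /finite_fsetP [X ->]; exists (\max_(x <- finmap.enum_fset X) x).+1 => m /= mX.
by rewrite ltnS (@leq_bigmax_seq _ (finmap.enum_fset X) xpredT (fun x => x) m mX).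
Qed.

Lemma thin (hs : selective U) (hnp : nonprincipal U) (B1 : set nat)
  (phi : nat -> nat) : U B1 ->
  exists2 B, U B /\ B `<=` B1 &
    forall j m, B j -> B m -> (j < m)%N -> (phi j <= m)%N.
Proof.
move=> UB1.
pose Phi a := \max_(j < a) phi j.
have Phi_ge j a : (j < a)%N -> (phi j <= Phi a)%N.
  by move=> ja; rewrite /Phi; exact: (@leq_bigmax _ (fun j : 'I_a => phi j) (Ordinal ja)).
pose a := fix a i := if i is i'.+1 then maxn (a i').+1 (Phi (a i')) else 0%N.
have aS i : (a i < a i.+1)%N by rewrite /= leq_max leqnn.
have aP i : (Phi (a i) <= a i.+1)%N by rewrite /= leq_max leqnn orbT.
have amono : {homo a : i j / (i < j)%N}.
  by apply: homo_ltn => //; exact: ltn_trans.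
have amonoW i j : (i <= j)%N -> (a i <= a j)%N.
  by rewrite leq_eqVlt => /orP[/eqP->//|/amono/ltnW].
have age i : (i <= a i)%N.
  by elim: i => // i ih; apply: leq_ltn_trans ih (aS i).
pose A i := [set n | (a i <= n < a i.+1)%N].
have Adisj k l : k <> l -> A k `&` A l = set0.
  move=> kl; apply/seteqP; split => // n [/= /andP[h1 h2] /andP[h3 h4]].
  case: (ltngtP k l) => [kl'|lk|/eqP]; last by move/eqP.
  - have := amonoW _ _ kl'; lia.
  - have := amonoW _ _ lk; lia.
have Acov n : exists i, A i n.
  have ex : exists i, (n < a i.+1)%N.
    by exists n; apply: leq_trans (age n.+1).
  case: (ex_minnP ex) => i ni imin; exists i; apply/andP; split; last exact: ni.
  case: i ni imin => [|i] ni imin //.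
  by rewrite leqNgt; apply/negP => /imin; rewrite ltnn.
have [B2 UB2 hB2] : exists2 B2, U B2 & forall k, exists x, B2 `&` A k = [set x].
  case: hs => _ [_ h2]; apply: h2.
  - exact: Adisj.
  - by move=> k; exists (a k); rewrite /A /= leqnn aS.
  - by move=> k; apply: (sub_finite_set _ (finite_II (a k.+1))) => n /= /andP[].
  - by apply/seteqP; split => // n _; have [i ?] := Acov n; exists i.
have [blk hblk] := choice Acov.
have blk_uniq n i : A i n -> blk n = i.
  move=> Ain; apply: contrapT => ne.
  by have := Adisj _ _ ne; move/seteqP => [+ _] => /(_ n (conj (hblk n) Ain)).
pose Ev := [set n | odd (blk n)].
have [B3 [UB3 hB3]] : exists B3, U B3 /\ forall n m, B3 n -> B3 m -> odd (blk n) = odd (blk m).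
  case: hU => _ _ _ _ /(_ Ev) [hE|hE]; [exists Ev|exists (~` Ev)]; split => //.
  - by move=> n m /= -> ->.
  - by move=> n m /= /negP/negbTE -> /negP/negbTE ->.
exists (B1 `&` B2 `&` B3).
  split; first by apply: U_I => //; exact: U_I.
  by move=> n [[]].
move=> j m [[_ B2j] B3j] [[_ B2m] B3m] jm.
have Aj := hblk j; have Am := hblk m.
have ne : blk j <> blk m.
  move=> e; have [x hx] := hB2 (blk j).
  have : (B2 `&` A (blk j)) j by [].
  have : (B2 `&` A (blk j)) m by rewrite e.
  rewrite hx => /= em ej; by move: jm; rewrite em ej ltnn.
have lt : (blk j < blk m)%N.
  rewrite ltnNge leq_eqVlt; apply/negP => /orP[/eqP e|lt]; first by apply: ne.
  have := amonoW _ _ lt; move: Aj Am; rewrite /A /= => /andP[? ?] /andP[? ?]; lia.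
have lt2 : ((blk j).+2 <= blk m)%N.
  have := hB3 _ _ B3j B3m; move: lt ne.
  rewrite leq_eqVlt => /orP[/eqP e _ ho|//].
  by rewrite -e /= in ho; case: (odd (blk j)) ho.
apply: (leq_trans (Phi_ge j (a (blk j).+1) _)).
  by move: Aj => /andP[].
apply: (leq_trans (aP _)).
apply: (leq_trans (amonoW _ _ lt2)).
by move: Am => /andP[].
Qed.

End Comb.

Lemma pick_max (P : nat -> Prop) n : (forall K, P K -> (K <= n)%N) ->
  exists k, ((0 < k)%N -> P k) /\ forall K, P K -> (K <= k)%N.
Proof.
move=> hb.
suff: forall m, exists k, ((0 < k)%N -> P k) /\
    forall K, (K <= m)%N -> P K -> (K <= k)%N.
  by move=> /(_ n) [k [h1 h2]]; exists k; split => // K PK; apply: h2 => //; exact: hb.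
elim=> [|m [k [h1 h2]]].
  by exists 0%N; split => // K; rewrite leqn0 => /eqP ->.
have [Pm|nPm] := pselect (P m.+1).
  by exists m.+1; split => // K hK _.
exists k; split => // K; rewrite leq_eqVlt => /orP[/eqP->//|hK PK].
by apply: h2 => //.
Qed.
Section Ana.
Variable R : realType.
Variable p : R.
Hypothesis hp : 1 < p.
Local Notation mu := (@lebesgue_measure R).
Local Notation I01 := (@I01 R).

Definition pz (u : R -> R) (D : set R) : R -> R := patch (fun=> 0) D u.

Lemma pz_meas {u : R -> R} {D : set R} : measurable D -> measurable_fun D u ->
  measurable_fun setT (pz u D).
Proof.
move=> mD mu'.
exact: (proj1 (@measurable_restrictT _ _ _ _ D
  (u : R -> Real_sort__canonical__measurable_structure_SigmaRing R) mD) mu').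
Qed.

Definition Ip (u : R -> R) : \bar R := (\int[mu]_(x in I01) (`|u x| `^ p)%:E)%E.

Lemma p0 : 0 < p. Proof. by apply: lt_trans hp. Qed.
Lemma pneq0 : p != 0. Proof. by rewrite gt_eqF // p0. Qed.
Lemma pV0 : p^-1 != 0. Proof. by rewrite invr_eq0 pneq0. Qed.

Lemma mI01 : measurable (I01 : set R).
Proof. exact: measurable_itv. Qed.

Lemma Lpnorm_Ip (u : R -> R) : Lpnorm p u = fine (Ip u) `^ p^-1.
Proof. by []. Qed.

Lemma Ip_ge0 (u : R -> R) : (0 <= Ip u)%E.
Proof. by apply: integral_ge0 => x _; rewrite lee_fin powR_ge0. Qed.

Lemma mpow {u : R -> R} : measurable_fun I01 u ->
  measurable_fun I01 (fun x => (`|u x| `^ p)%:E).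
Proof.
move=> mu'; apply/measurable_EFinP.
apply: (measurableT_comp (measurable_powR p)).
exact: (measurableT_comp (@normr_measurable R setT) mu').
Qed.

Lemma Ip_le {u v : R -> R} : measurable_fun I01 u -> measurable_fun I01 v ->
  (forall x, I01 x -> `|u x| <= `|v x|) -> (Ip u <= Ip v)%E.
Proof.
move=> mu' mv h; apply: ge0_le_integral.
- exact: mI01.
- by move=> x _; rewrite lee_fin powR_ge0.
- exact: mpow.
- exact: mpow.
- move=> x Ix; rewrite lee_fin; apply: ge0_ler_powR;
  [exact: ltW p0|by rewrite nnegrE|by rewrite nnegrE|exact: h].
Qed.

Lemma Ip_eq {u v : R -> R} : {in I01, u =1 v} -> Ip u = Ip v.
Proof. by move=> h; apply: eq_integral => x /h ->. Qed.

Lemma Lpnorm_eq {u v : R -> R} : {in I01, u =1 v} -> Lpnorm p u = Lpnorm p v.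
Proof. by move=> h; change (fine (Ip u) `^ p^-1 = fine (Ip v) `^ p^-1); rewrite (Ip_eq h). Qed.

Lemma Ip_fin {u : R -> R} : (Ip u < +oo)%E -> Ip u \is a fin_num.
Proof. move=> h; rewrite ge0_fin_numE; [exact: h| exact: Ip_ge0]. Qed.

Lemma Lp_le {u v : R -> R} : measurable_fun I01 u -> measurable_fun I01 v ->
  (Ip v < +oo)%E -> (forall x, I01 x -> `|u x| <= `|v x|) ->
  (Ip u < +oo)%E /\ Lpnorm p u <= Lpnorm p v.
Proof.
move=> mu' mv hv h; have huv := Ip_le mu' mv h.
have hu : (Ip u < +oo)%E by apply: le_lt_trans hv.
split; first exact: hu.
change (fine (Ip u) `^ p^-1 <= fine (Ip v) `^ p^-1).
have fu := Ip_fin hu.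
have fv := Ip_fin hv.
have := fine_le fu fv huv.
apply: ge0_ler_powR.
- by rewrite invr_ge0 ltW // p0.
- by rewrite nnegrE; apply: fine_ge0; exact: Ip_ge0.
- by rewrite nnegrE; apply: fine_ge0; exact: Ip_ge0.
Qed.

Lemma powRK x : 0 <= x -> (x `^ p^-1) `^ p = x.
Proof. by move=> x0; rewrite -powRrM mulVf ?pneq0 // powRr1. Qed.

Lemma powRKV x : 0 <= x -> (x `^ p) `^ p^-1 = x.
Proof. by move=> x0; rewrite -powRrM mulfV ?pneq0 // powRr1. Qed.

Lemma Ip_patch_pt (u : R -> R) (x : R) :
  (`|(pz u I01) x| `^ p)%:E = ((fun x => (`|u x| `^ p)%:E) \_ I01) x.
Proof.
by rewrite /pz /patch; case: ifP => _; rewrite ?normr0 ?powR0 ?pneq0.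
Qed.

Lemma NIp (u : R -> R) : ('N[mu]_p%:E[EFin \o (pz u I01)] = (Ip u) `^ p^-1)%E.
Proof.
rewrite unlock /Ip [in RHS]integral_mkcond; congr (_ `^ _)%E.
by apply: eq_integral => x _ /=; rewrite -Ip_patch_pt.
Qed.

Lemma NIp_fin {u : R -> R} : (Ip u < +oo)%E ->
  ('N[mu]_p%:E[EFin \o (pz u I01)] = (Lpnorm p u)%:E)%E.
Proof.
move=> h; by rewrite NIp -[Ip u](fineK (Ip_fin h)) poweR_EFin.
Qed.

Lemma Lp_tri {u v : R -> R} : measurable_fun I01 u -> measurable_fun I01 v ->
  (Ip u < +oo)%E -> (Ip v < +oo)%E ->
  (Ip (u \+ v)%R < +oo)%E /\ Lpnorm p (u \+ v) <= Lpnorm p u + Lpnorm p v.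
Proof.
move=> mu' mv hu hv.
have mu2 := pz_meas mI01 mu'.
have mv2 := pz_meas mI01 mv.
have := minkowski_EFin mu mu2 mv2 (ltW hp).
have -> : (pz u I01 \+ pz v I01)%R = pz (u \+ v) I01.
  by apply/funext => x; rewrite /pz /patch /=; case: ifP => _; rewrite ?addr0.
rewrite (NIp_fin hu) (NIp_fin hv) NIp => hm.
have huv : (Ip (u \+ v)%R < +oo)%E.
  rewrite ltNge leye_eq; apply/negP => /eqP e.
  by move: hm; rewrite e (poweRyr pV0) leye_eq.
split; first exact: huv.
by move: hm; rewrite -[Ip (u \+ v)%R](fineK (Ip_fin huv)) poweR_EFin -EFinD lee_fin.
Qed.


Lemma Ip_opp (u : R -> R) : Ip (fun x => - u x) = Ip u.
Proof. by apply: eq_integral => x _; rewrite normrN. Qed.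

Lemma Lp_tri3 {a b c : R -> R} :
  measurable_fun I01 a -> measurable_fun I01 b -> measurable_fun I01 c ->
  (Ip a < +oo)%E -> (Ip b < +oo)%E -> (Ip c < +oo)%E ->
  Lpnorm p (a \- c) <= Lpnorm p (a \- b) + Lpnorm p (b \- c).
Proof.
move=> ma mb mc ha hb hc.
have mNb : measurable_fun I01 (fun x => - b x).
  exact: measurable_funN.
have mNc : measurable_fun I01 (fun x => - c x).
  exact: measurable_funN.
have hNb : (Ip (fun x => - b x)%R < +oo)%E by rewrite Ip_opp.
have hNc : (Ip (fun x => - c x)%R < +oo)%E by rewrite Ip_opp.
have [hab _] := Lp_tri ma mNb ha hNb.
have [hbc _] := Lp_tri mb mNc hb hNc.
have mab : measurable_fun I01 (a \- b)%R by apply: measurable_funB.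
have mbc : measurable_fun I01 (b \- c)%R by apply: measurable_funB.
have [_ ht] := Lp_tri mab mbc hab hbc.
suff -> : (a \- c)%R = ((a \- b) \+ (b \- c))%R by exact: ht.
by apply/funext => x /=; rewrite addrA subrK.
Qed.

Lemma Ip_pt_ge0 (u : R -> R) x : (0 <= (`|u x| `^ p)%:E)%E.
Proof. by rewrite lee_fin powR_ge0. Qed.

Lemma cheb_meas {h : R -> R} (r : R) : measurable_fun I01 h ->
  measurable (I01 `&` [set x | r < `|h x|]).
Proof.
move=> mh.
have mnh : measurable_fun I01 (fun x => `|h x|).
  exact: (measurableT_comp (@normr_measurable R setT) mh).
have -> : [set x | r < `|h x|] = (fun x => `|h x|) @^-1` `]r, +oo[%classic.
  by apply/seteqP; split => x /=; rewrite in_itv /= andbT.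
apply: mnh; [exact: mI01|exact: measurable_itv].
Qed.

Lemma cheb {h : R -> R} (r : R) : measurable_fun I01 h -> 0 < r ->
  ((r `^ p)%:E * mu (I01 `&` [set x | (r < `|h x|)%R]) <= Ip h)%E.
Proof.
move=> mh r0.
have mS := cheb_meas r mh.
set S := I01 `&` _ in mS *.
have mi : measurable_fun I01 (EFin \o (\1_S : R -> R)).
  by apply/measurable_EFinP; exact: measurable_indic.
have -> : mu S = (\int[mu]_(x in I01) (\1_S x)%:E)%E.
  rewrite integral_indic; [|exact: mI01|exact: mS].
  by rewrite setIidl // => x [].
have i0 : forall x, I01 x -> (0 <= (EFin \o (\1_S : R -> R)) x)%E.
  by move=> x _; rewrite lee_fin indicE.
rewrite -(ge0_integralZl_EFin mu mI01 i0 mi (powR_ge0 r p)).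
apply: ge0_le_integral; first exact: mI01.
- by move=> x _; rewrite mule_ge0 // lee_fin ?powR_ge0 // indicE.
- apply: emeasurable_funM; last exact: mi.
  exact: measurable_cst.
- exact: mpow.
- move=> x Ix /=; rewrite indicE; case: (boolP (x \in S)) => [xS|_].
    rewrite mule1 lee_fin; apply: ge0_ler_powR.
    + exact: ltW p0.
    + by rewrite nnegrE ltW.
    + by rewrite nnegrE.
    + by move: xS; rewrite inE => -[_ /ltW].
  by rewrite mule0 Ip_pt_ge0.
Qed.

Lemma abscont {h : R -> R} : measurable_fun I01 h -> (Ip h < +oo)%E ->
  forall e, 0 < e -> exists2 d, 0 < d &
    forall E, measurable E -> (mu E < d%:E)%E -> fine (Ip (pz h E)) < e.
Proof.
move=> mh hh e e0.
pose F := pz (fun x => `|h x| `^ p) I01.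
have mF : measurable_fun setT F.
  apply: pz_meas; first exact: mI01.
  apply: (measurableT_comp (measurable_powR p)).
  exact: (measurableT_comp (@normr_measurable R setT) mh).
have eqF : forall E, measurable E ->
    (\int[mu]_(x in E) (`|F x|)%:E)%E = Ip (pz h E).
  move=> E mE; rewrite [in LHS]integral_mkcond /Ip [in RHS]integral_mkcond.
  apply: eq_integral => x _; rewrite /patch /F /pz /patch.
  case: (boolP (x \in E)) => xE; case: (boolP (x \in I01)) => xI //=.
  - by rewrite ger0_norm // powR_ge0.
  - by rewrite normr0.
  - by rewrite normr0 powR0 ?pneq0.
have iF : mu.-integrable setT (EFin \o F).
  apply/integrableP; split; first exact/measurable_EFinP.
  have := eqF setT measurableT.
  rewrite /= => ->.
  rewrite (@Ip_eq _ h) //.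
  by move=> x _; rewrite /pz /patch in_setT.
have [d [d0 hd]] := integral_normr_continuous iF e0.
exists d; first exact: d0.
move=> E mE hE; have := hd E mE hE.
by rewrite /Rintegral eqF.
Qed.


Lemma nat_gt (x : R) : exists N : nat, x < N%:R.
Proof.
exists (Num.Def.trunc `|x|).+1.
apply: (le_lt_trans (ler_norm x)).
by rewrite -truncn_lt_nat // normr_ge0.
Qed.

Lemma main_ana (U : set (set nat)) (f : nat -> R -> R) :
  selective U -> nonprincipal U -> bdd_Lp_seq p f -> in_range_R U p f ->
  exists g : nat -> R -> R,
    [/\ bdd_Lp_seq p g, disjoint_supports g & ueq U p f g].
Proof.
move=> hs hnp [hf _] [h [hh [M hM]] hR].
have hU : is_ultrafilter U by case: hs.
have mh n : measurable_fun I01 (h n) by case: (hh n).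
have Ih n : (Ip (h n) < +oo)%E by case: (hh n).
have mf n : measurable_fun I01 (f n) by case: (hf n).
have If n : (Ip (f n) < +oo)%E by case: (hf n).
have M0 : 0 <= M by apply: le_trans (hM 0%N); exact: powR_ge0.
set q := M `^ p.
have q0 : 0 <= q by exact: powR_ge0.
have Iq n : (Ip (h n) <= q%:E)%E.
  rewrite -(fineK (Ip_fin (Ih n))) lee_fin.
  have fI0 : 0 <= fine (Ip (h n)) by apply: fine_ge0; exact: Ip_ge0.
  rewrite -(powRK fI0); apply: ge0_ler_powR.
  - exact: ltW p0.
  - by rewrite nnegrE powR_ge0.
  - by rewrite nnegrE.
  - exact: hM.
have [r0 hr0] := choice (fun i : nat =>
  hR ((i.+1)%:R)^-1 (ltac:(by rewrite invr_gt0 ltr0n))).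
pose rr i := Num.max (r0 i) ((q * (2 ^ i.+1)%:R + 1) `^ p^-1).
have rr_r0 i : r0 i <= rr i by rewrite le_max lexx.
have t0 i : 0 < q * (2 ^ i.+1)%:R + 1.
  by apply: ltr_wpDl; [apply: mulr_ge0 => //; exact: ler0n| exact: ltr01].
have rrp i : q * (2 ^ i.+1)%:R + 1 <= rr i `^ p.
  rewrite -[leLHS](powRK (ltW (t0 i))); apply: ge0_ler_powR.
  - exact: ltW p0.
  - by rewrite nnegrE powR_ge0.
  - rewrite nnegrE; apply: le_trans (powR_ge0 (q * (2 ^ i.+1)%:R + 1) p^-1) _.
    by rewrite le_max lexx orbT.
  - by rewrite le_max lexx orbT.
have rr0 i : 0 < rr i.
  apply: (lt_le_trans (@powR_gt0 R _ p^-1 (t0 i))); by rewrite le_max lexx orbT.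
have hS i n : (mu (I01 `&` [set x | (rr i < `|h n x|)%R]) <= ((2 ^ i.+1)%:R^-1)%:E)%E.
  have c := le_trans (cheb (mh n) (rr0 i)) (Iq n).
  move: c; set m := mu _ => c.
  have m0 : (0 <= m)%E by apply: measure_ge0.
  move: m c m0 => [s||] hc s0.
  - rewrite lee_fin; move: hc; rewrite -EFinM lee_fin => hc.
    have tp : 0 < ((2 ^ i.+1)%:R : R) by rewrite ltr0n expn_gt0.
    have := rrp i; set t := ((2 ^ i.+1)%:R : R) in tp *; set P := rr i `^ p => hP.
    have s0' : 0 <= s by move: s0; rewrite lee_fin.
    have h1 : (q * t + 1) * s <= q.
      apply: le_trans hc; rewrite /P; exact: ler_wpM2r.
    have h2 : q * (s * t) <= q * 1.
      rewrite mulr1; apply: le_trans h1.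
      by rewrite mulrDl mul1r mulrAC mulrA lerDl.
    have st : s * t <= 1.
      case: (ltrP 0 q) => [qp|q0']; first by rewrite -(ler_pM2l qp).
      have qe : q = 0 by apply/eqP; rewrite eq_le q0' q0.
      move: h1; rewrite qe mul0r add0r mul1r => s00.
      have -> : s = 0 by apply/eqP; rewrite eq_le s00 s0'.
      by rewrite mul0r ler01.
    by rewrite -(ler_pM2r tp) mulVf // lt0r_neq0.
  - exfalso; move: hc; rewrite gt0_muley ?lte_fin ?powR_gt0 // leye_eq.
  - by [].
pose D i := [set n | Lpnorm p (f n \- trunc_above (rr i) (h n)) < (i.+1%:R)^-1].
have UD i : U (D i) by apply: hr0; exact: rr_r0.
pose G K := [set n | (K <= n)%N /\ forall i, (i <= K)%N -> D i n].
have UG K : U (G K).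
  have UG' : forall K, U [set n | forall i, (i <= K)%N -> D i n].
    elim=> [|K' ih].
      apply: (U_up hU (UD 0%N)) => n Dn i; rewrite leqn0 => /eqP ->.
      exact: Dn.
    apply: (U_up hU (U_I hU ih (UD K'.+1))) => n [h1 h2] i.
    by rewrite leq_eqVlt => /orP[/eqP->//|]; rewrite ltnS; exact: h1.
  apply: (U_up hU (U_I hU (U_cofinite hU hnp K) (UG' K))) => n [h1 h2].
  by split.
have [k hk] := choice (fun n => @pick_max (fun K => G K n) n (fun K GK => proj1 GK)).
pose S n := I01 `&` [set x | rr (k n) < `|h n x|].
have mS n : measurable (S n) by exact: cheb_meas.
have hSn n : (mu (S n) <= ((2 ^ (k n).+1)%:R^-1)%:E)%E by exact: hS.
have ep0 n : 0 < (((k n).+1%:R)^-1) `^ p by apply: powR_gt0; rewrite invr_gt0 ltr0n.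
have : forall n, exists d, 0 < d /\ forall E, measurable E -> (mu E < d%:E)%E ->
    fine (Ip (pz (h n) E)) < (((k n).+1%:R)^-1) `^ p.
  by move=> n; have [d d0 hd] := abscont (mh n) (Ih n) (ep0 n); exists d.
move=> /choice [del hdel].
have : forall n, exists K, (k n < K)%N /\ ((2 ^ K)%:R)^-1 < del n.
  move=> n; have [N hN] := nat_gt (del n)^-1.
  have d0 := proj1 (hdel n).
  exists (maxn (k n).+1 N); split; first by rewrite leq_max leqnn.
  rewrite -[X in _ < X]invrK ltf_pV2 ?posrE ?invr_gt0 ?ltr0n ?expn_gt0 //.
  apply: (lt_le_trans hN); rewrite ler_nat.
  apply: (leq_trans (leq_maxr (k n).+1 N)); exact: ltnW (ltn_expl _ (ltnSn 1)).
move=> /choice [KK hKK].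
have [B1 UB1 hB1] : exists2 B1, U B1 & forall K, finite_set (B1 `\` G K).
  by case: hs => _ [h1 _]; apply: h1.
have : forall j, exists N, forall m, (N <= m)%N -> B1 m -> G (KK j) m.
  move=> j; have [N hN] := bounded_of_finite (hB1 (KK j)).
  exists N => m Nm B1m; apply: contrapT => nG.
  by have := hN m (conj B1m nG); rewrite ltnNge Nm.
move=> /choice [phi hphi].
have [B [UB BB1] hB] := thin hU hs hnp phi UB1.
have hBK j m : B j -> B m -> (j < m)%N -> (KK j <= k m)%N.
  move=> Bj Bm jm; apply: (proj2 (hk m)); apply: hphi (hB _ _ Bj Bm jm) (BB1 _ Bm).
have hinj m1 m2 : B m1 -> B m2 -> k m1 = k m2 -> m1 = m2.
  move=> B1m B2m e; case: (ltngtP m1 m2) => // lt.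
  - have := hBK _ _ B1m B2m lt; have := proj1 (hKK m1); rewrite e; lia.
  - have := hBK _ _ B2m B1m lt; have := proj1 (hKK m2); rewrite e; lia.
pose E n := \bigcup_(m in [set m | B m /\ (n < m)%N]) S m.
have mE n : measurable (E n) by apply: bigcup_measurable => m _; exact: mS.
have muE n : B n -> (mu (E n) < (del n)%:E)%E.
  move=> Bn.
  pose Z i := \bigcup_(m in [set m | B m /\ (n < m)%N /\ k m = (i + KK n)%N]) S m.
  have mZ i : measurable (Z i) by apply: bigcup_measurable => m _; exact: mS.
  have sub : E n `<=` \bigcup_i Z i.
    move=> x [m [Bm nm] Sx]; exists (k m - KK n)%N => //; exists m => //.
    by split => //; split => //; rewrite subnK //; exact: hBK.
  have h1 := measure_sigma_subadditive mu mZ (mE n) sub.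
  set e := ((2 ^ KK n)%:R)^-1 : R.
  have e0 : 0 <= e by rewrite invr_ge0 ler0n.
  have hZ i : (mu (Z i) <= (e / (2 ^ i.+1)%:R)%:E)%E.
    case: (pselect (exists m, B m /\ (n < m)%N /\ k m = (i + KK n)%N)) =>
      [[m0 [Bm0 [nm0 km0]]]|nex].
    - have Zsub : Z i `<=` S m0.
        move=> x [m [Bm [nm km]] Sx].
        by have <- := hinj m m0 Bm Bm0 (etrans km (esym km0)).
      apply: le_trans (@le_measure _ _ _ mu _ _ (mem_set (mZ i)) (mem_set (mS m0)) Zsub) _.
      apply: le_trans (hSn m0) _; rewrite lee_fin km0 /e -invfM -natrM -expnD.
      rewrite (_ : ((i + KK n).+1 = KK n + i.+1)%N); [exact: lexx|lia].
    - have -> : Z i = set0.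
        apply/seteqP; split => // x [m hm _]; exfalso; apply: nex; exists m; exact: hm.
      by rewrite measure0 lee_fin divr_ge0 // ler0n.
  have h2 : (\sum_(0 <= i <oo) mu (Z i) <= e%:E)%E.
    apply: le_trans (@lee_nneseries _ _ (fun i => (0 + (e / (2 ^ i.+1)%:R)%:E)%E) _ _ _ _) _.
    - by move=> i _ _; exact: measure_ge0.
    - by move=> i _; rewrite add0e; exact: hZ.
    apply: le_trans (epsilon_trick _ _ e0) _.
    - by move=> i.
    by rewrite eseries0 // add0e.
  apply: le_lt_trans h1 (le_lt_trans h2 _); rewrite lte_fin; exact: (proj2 (hKK n)).
pose g n := fun x => (\1_B n : R) * (h n x * \1_(S n `\` E n) x).
have mSE n : measurable (S n `\` E n) by apply: measurableD.
have mg n : measurable_fun I01 (g n).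
  apply: measurable_funM; first exact: measurable_cst.
  apply: measurable_funM; first exact: mh.
  exact: measurable_indic.
have gle n x : `|g n x| <= `|h n x|.
  rewrite /g !indicE; case: (n \in B); case: (x \in S n `\` E n);
  by rewrite /= ?mulr0n ?mulr1n ?mul0r ?mulr0 ?mul1r ?mulr1 ?normr0 ?normr_ge0 ?lexx.
have Ig n : (Ip (g n) < +oo)%E /\ Lpnorm p (g n) <= Lpnorm p (h n).
  exact: (Lp_le (mg n) (mh n) (Ih n) (fun x _ => gle n x)).
have hbdd : bdd_Lp_seq p g.
  split; first by move=> n; split; [exact: mg|exact: (Ig n).1].
  by exists M => n; apply: le_trans (Ig n).2 (hM n).
have key j x : g j x <> 0 -> B j /\ (S j `\` E j) x.
  rewrite /g !indicE; case: (boolP (j \in B)) => jB;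
    case: (boolP (x \in S j `\` E j)) => xS;
    rewrite /= ?mulr0n ?mulr1n ?mul0r ?mulr0 // => _.
  by split; [exact: set_mem jB|exact: set_mem xS].
have hdisj : disjoint_supports g.
  move=> m n mn.
  suff -> : I01 `&` [set x | g m x <> 0 /\ g n x <> 0] = set0 by exact: measure0.
  apply/seteqP; split => // x [_ [/key [Bm [Smx nEm]] /key [Bn [Snx nEn]]]].
  case: (ltngtP m n) => [lt|lt|eq]; last by apply: mn.
  - by apply: nEm; exists n.
  - by apply: nEn; exists m.
have hueq : ueq U p f g.
  move=> eps eps0.
  have [N hN] := nat_gt (2 / eps).
  pose K0 := N.+1.
  apply: (U_up hU (U_I hU UB (UG K0))) => n [Bn GK0n].
  have kK0 : (K0 <= k n)%N := proj2 (hk n) _ GK0n.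
  have Gk : G (k n) n := proj1 (hk n) (leq_trans (ltn0Sn N) kK0).
  have Dk : D (k n) n := (proj2 Gk) (k n) (leqnn _).
  pose Th := fun x => h n x * \1_(S n) x.
  have mTh : measurable_fun I01 Th.
    by apply: measurable_funM; [exact: mh|exact: measurable_indic].
  have ITh : (Ip Th < +oo)%E.
    apply: (Lp_le mTh (mh n) (Ih n) _).1 => x _.
    rewrite /Th indicE; case: (x \in S n);
    by rewrite /= ?mulr0n ?mulr1n ?mulr0 ?mulr1 ?normr0 ?normr_ge0 ?lexx.
  have t1 : Lpnorm p (f n \- Th) < ((k n).+1%:R)^-1.
    rewrite (_ : Lpnorm p (f n \- Th) =
      Lpnorm p (f n \- trunc_above (rr (k n)) (h n))); first exact: Dk.
    apply: Lpnorm_eq => x xI; rewrite /Th /trunc_above /= indicE.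
    case: (boolP (x \in S n)) => xS.
    + have [_ hx] := set_mem xS; rewrite /= in hx.
      by rewrite hx /= mulr1n mulr1.
    + have hx : ~~ (rr (k n) < `|h n x|).
        apply/negP => hx; apply: (negP xS); apply: mem_set; split => //.
        exact: set_mem xI.
      by rewrite (negbTE hx) /= mulr0n mulr0.
  have pzE : pz (h n) (E n) = (h n \* \1_(E n))%R.
    apply/funext => x; rewrite /pz /patch /= indicE.
    by case: (x \in E n); rewrite /= ?mulr1n ?mulr0n ?mulr1 ?mulr0.
  have mpz : measurable_fun I01 (pz (h n) (E n)).
    by rewrite pzE; apply: measurable_funM; [exact: mh|exact: measurable_indic].
  have Ipz : (Ip (pz (h n) (E n)) < +oo)%E.
    apply: (Lp_le mpz (mh n) (Ih n) _).1 => x _; rewrite /pz /patch.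
    by case: (x \in E n); rewrite ?normr0 ?normr_ge0 ?lexx.
  have t2 : Lpnorm p (Th \- g n) <= Lpnorm p (pz (h n) (E n)).
    apply: (Lp_le (measurable_funB mTh (mg n)) mpz Ipz _).2 => x _.
    rewrite /Th /g /pz /patch /= !indicE (mem_set Bn) in_setD /=.
    case: (x \in E n); case: (x \in S n);
    by rewrite /= ?mulr1n ?mulr0n ?mul1r ?mulr1 ?mulr0 ?subrr ?subr0 ?normr0 ?normr_ge0 ?lexx.
  have t3 : Lpnorm p (pz (h n) (E n)) < ((k n).+1%:R)^-1.
    have hlt := (proj2 (hdel n)) (E n) (mE n) (muE n Bn).
    have kp : 0 <= ((k n).+1%:R)^-1 :> R by rewrite invr_ge0 ler0n.
    rewrite -[X in _ < X](powRKV kp).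
    change (fine (Ip (pz (h n) (E n))) `^ p^-1 < ((((k n).+1%:R)^-1) `^ p) `^ p^-1).
    apply: gt0_ltr_powR.
    - by rewrite invr_gt0 p0.
    - by rewrite nnegrE; apply: fine_ge0; exact: Ip_ge0.
    - by rewrite nnegrE powR_ge0.
    - exact: hlt.
  have ht := Lp_tri3 (mf n) mTh (mg n) (If n) ITh (Ig n).1.
  apply: le_lt_trans ht _.
  have ab : ((k n).+1%:R)^-1 <= (K0.+1%:R)^-1 :> R.
    by rewrite lef_pV2 ?posrE ?ltr0n // ler_nat ltnS.
  have hK2 : 2 < K0.+1%:R * eps.
    rewrite -ltr_pdivrMr //; apply: lt_trans hN _; rewrite ltr_nat; lia.
  have hK' : 2 / K0.+1%:R < eps.
    by rewrite ltr_pdivrMr ?ltr0n // mulrC.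
  apply: (lt_le_trans (ltrD t1 (le_lt_trans t2 t3))).
  apply: (le_trans (lerD ab ab)).
  have e2 : 2 / K0.+1%:R = (K0.+1%:R)^-1 + (K0.+1%:R)^-1 :> R by ring.
  by rewrite -e2; exact: ltW hK'.
by exists g; split.
Qed.





End Ana.

Theorem lemma3p2 (R : realType) (p : R) (U : set (set nat))
  (f : nat -> R -> R) :
  1 < p -> selective U -> nonprincipal U ->
  bdd_Lp_seq p f -> in_range_R U p f ->
  exists g : nat -> R -> R,
    [/\ bdd_Lp_seq p g, disjoint_supports g & ueq U p f g].
Proof. by move=> hp; exact: main_ana. Qed.
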